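(* Let $\sigma$ be a countable relational signature containing distinct relation symbols $Q,R$ with the arity of $R$ at least $2$. Let $X\subseteq\omega$ be such that there exists a $\sigma$-structure $\mathcal M$ with $Q^{\mathcal M}=\emptyset$ and $|s(f)|\in X$ for every $f\in\mathrm{Aut}(\mathcal M)$. Let $\mathbf P=\{\mathcal A\in\mathbf S_\sigma:|s(f)|\in X\text{ for every }f\in\mathrm{Aut}(\mathcal A)\}$. Then $\mathbf P$ is not expressible in $FO(\sigma)$; every abstract logic $L(\sigma)\geq FO(\sigma)$ that can express $\mathbf P$ fails the $\aleph_0$-compactness property; and every such logic which is moreover closed under negation has no sound and complete proof system.
   Context: $\omega$ is the set of finite cardinals. The support $s(f)$ of a function $f$ is the set of $a$ in its domain with $f(a)\neq a$. $\mathbf S_\sigma$ is the class of $\sigma$-structures, $\mathrm{Aut}(\mathcal A)$ the automorphism group. An abstract logic over $\sigma$ is a pair $(L(\sigma),\models_{L(\sigma)})$ with isomorphism-invariant satisfaction relation; a class is expressed by it if some sentence is satisfied exactly by its members; $L(\sigma)\geq FO(\sigma)$ means every first-order expressible class is $L(\sigma)$-expressible; $\aleph_0$-compactness: every countable finitely satisfiable set of sentences is satisfiable; closed under negation: each sentence has a sentence true exactly where it is false. A proof system $(\Pi,p,c)$ assigns to each $\pi$ a finite sequence of premisses and a conclusion; sound: premisses semantically entail the conclusion; complete: whenever $\Gamma$ entails $\psi$ some $\pi$ has conclusion $\psi$ and all premisses in $\Gamma$. *)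

(* Defs.v *)
From Stdlib Require Import List Arith.
Import ListNotations.
Set Implicit Arguments.

Definition fin (n : nat) : Type := {i : nat | i < n}.

Record signature := { sym : Type; arity : sym -> nat }.

Definition countable_sig (s : signature) : Prop :=
  exists e : sym s -> nat, forall a b, e a = e b -> a = b.

(* sigma-structures (nonempty universe, as usual in first-order model theory). *)
Record structure (s : signature) := {
  dom :> Type;
  dom_inh : dom;
  rel : forall r : sym s, (fin (arity s r) -> dom) -> Prop }.

Definition bijective (A B : Type) (h : A -> B) : Prop :=
  exists g : B -> A, (forall x, g (h x) = x) /\ (forall y, h (g y) = y).

Definition is_iso (s : signature) (A B : structure s) (h : A -> B) : Prop :=
  bijective h /\
  forall (r : sym s) (t : fin (arity s r) -> A),
    rel A r t <-> rel B r (fun i => h (t i)).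

Definition automorphism (s : signature) (A : structure s) (f : A -> A) : Prop :=
  is_iso A A f.

Definition support (T : Type) (f : T -> T) : T -> Prop := fun a => f a <> a.

Definition card_is (T : Type) (P : T -> Prop) (n : nat) : Prop :=
  exists l : list T, NoDup l /\ length l = n /\ forall x, In x l <-> P x.

Definition aut_supports_in (s : signature) (X : nat -> Prop) (A : structure s) : Prop :=
  forall f : A -> A, automorphism A f ->
    exists n, X n /\ card_is (support f) n.

Inductive formula (s : signature) : Type :=
| FRel : forall r : sym s, (fin (arity s r) -> nat) -> formula s
| FEq : nat -> nat -> formula s
| FFalse : formula s
| FNot : formula s -> formula s
| FAnd : formula s -> formula s -> formula s
| FOr : formula s -> formula s -> formula s
| FImp : formula s -> formula s -> formula s
| FAll : nat -> formula s -> formula s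
| FEx : nat -> formula s -> formula s.

Definition update (T : Type) (env : nat -> T) (x : nat) (a : T) : nat -> T :=
  fun y => if Nat.eqb y x then a else env y.

Fixpoint sat (s : signature) (A : structure s) (env : nat -> A) (phi : formula s) : Prop :=
  match phi with
  | @FRel _ r v => rel A r (fun i => env (v i))
  | @FEq _ x y => env x = env y
  | @FFalse _ => False
  | @FNot _ p => ~ sat A env p
  | @FAnd _ p q => sat A env p /\ sat A env q
  | @FOr _ p q => sat A env p \/ sat A env q
  | @FImp _ p q => sat A env p -> sat A env q
  | @FAll _ x p => forall a : A, sat A (update env x a) p
  | @FEx _ x p => exists a : A, sat A (update env x a) p
  end.

Fixpoint free (s : signature) (x : nat) (phi : formula s) : Prop :=
  match phi with
  | @FRel _ r v => exists i, v i = x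
  | @FEq _ y z => y = x \/ z = x
  | @FFalse _ => False
  | @FNot _ p => free x p
  | FAnd p q | FOr p q | @FImp _ p q => free x p \/ free x q
  | @FAll _ y p | @FEx _ y p => y <> x /\ free x p
  end.

Definition is_sentence (s : signature) (phi : formula s) : Prop :=
  forall x, ~ free x phi.

Definition sat_sentence (s : signature) (A : structure s) (phi : formula s) : Prop :=
  forall env : nat -> A, sat A env phi.

Definition FO_expressible (s : signature) (P : structure s -> Prop) : Prop :=
  exists phi : formula s, is_sentence phi /\
    forall A : structure s, sat_sentence A phi <-> P A.

Record abstract_logic (s : signature) := {
  lsent : Type;
  lsat : structure s -> lsent -> Prop;
  lsat_iso : forall (A B : structure s) (h : A -> B) (phi : lsent),
      is_iso A B h -> lsat A phi -> lsat B phi }.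

Definition L_expressible (s : signature) (L : abstract_logic s) (P : structure s -> Prop) : Prop :=
  exists psi : lsent L, forall A : structure s, lsat L A psi <-> P A.

Definition L_ge_FO (s : signature) (L : abstract_logic s) : Prop :=
  forall P : structure s -> Prop, FO_expressible P -> L_expressible L P.

Definition countable_set (T : Type) (G : T -> Prop) : Prop :=
  exists e : nat -> T, forall x, G x -> exists n, e n = x.

Definition L_satisfiable (s : signature) (L : abstract_logic s) (G : lsent L -> Prop) : Prop :=
  exists A : structure s, forall phi, G phi -> lsat L A phi.

Definition L_fin_satisfiable (s : signature) (L : abstract_logic s) (G : lsent L -> Prop) : Prop :=
  forall l : list (lsent L), (forall phi, In phi l -> G phi) ->
    exists A : structure s, forall phi, In phi l -> lsat L A phi.

Arguments L_satisfiable {s} L G.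
Arguments L_fin_satisfiable {s} L G.
Definition aleph0_compact (s : signature) (L : abstract_logic s) : Prop :=
  forall G : lsent L -> Prop, countable_set G -> L_fin_satisfiable L G -> L_satisfiable L G.

Definition closed_neg (s : signature) (L : abstract_logic s) : Prop :=
  forall phi : lsent L, exists psi : lsent L,
    forall A : structure s, lsat L A psi <-> ~ lsat L A phi.

Record proof_system (s : signature) (L : abstract_logic s) := {
  proofs : Type;
  premisses : proofs -> list (lsent L);
  conclusion : proofs -> lsent L }.

Definition L_entails (s : signature) (L : abstract_logic s) (G : lsent L -> Prop) (psi : lsent L) : Prop :=
  forall A : structure s, (forall phi, G phi -> lsat L A phi) -> lsat L A psi.

Arguments L_entails {s} L G psi.
Definition ps_sound (s : signature) (L : abstract_logic s) (PS : proof_system L) : Prop :=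
  forall pi : proofs PS, L_entails L (fun phi => In phi (premisses PS pi)) (conclusion PS pi).

Definition ps_complete (s : signature) (L : abstract_logic s) (PS : proof_system L) : Prop :=
  forall (G : lsent L -> Prop) (psi : lsent L), L_entails L G psi ->
    exists pi : proofs PS, conclusion PS pi = psi /\
      forall phi, In phi (premisses PS pi) -> G phi.

(* Main.v *)
Require Import Defs.
From Stdlib Require Import List Arith Lia ZArith Classical ClassicalEpsilon FunctionalExtensionality FinFun.
Import ListNotations.

Definition pat {D : Type} {n : nat} (x y : D) (i : fin n) : D :=
  if Nat.eqb (proj1_sig i) 0 then x else y.

Definition mkS (s : signature) (R : sym s) (D : Type) (d : D) (e : D -> D -> Prop) : structure s :=
  {| dom := D; dom_inh := d;
     rel := fun r t => exists x y, (forall i, t i = pat x y i) /\ r = R /\ e x y |}.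

Arguments mkS {s} R {D} d e.

Lemma fin_eq (n : nat) (i j : fin n) : proj1_sig i = proj1_sig j -> i = j.
Proof.
  destruct i as [i Hi], j as [j Hj]; simpl; intros ->.
  f_equal; apply Peano_dec.le_unique.
Qed.

Definition f0 (n : nat) (H : 2 <= n) : fin n := exist (fun i => i < n) 0 (Nat.lt_le_trans 0 2 n (Nat.lt_0_succ 1) H).
Definition f1 (n : nat) (H : 2 <= n) : fin n := exist (fun i => i < n) 1 (Nat.lt_le_trans 1 2 n (Nat.lt_succ_diag_r 1) H).

Arguments f0 {n}.
Arguments f1 {n}.

Lemma pat_inj {D : Type} {n : nat} (H : 2 <= n) {x y x' y' : D} :
  (forall i : fin n, pat x y i = pat x' y' i) -> x = x' /\ y = y'.
Proof.
  intros Hp. split.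
  - specialize (Hp (f0 H)). exact Hp.
  - specialize (Hp (f1 H)). exact Hp.
Qed.

Lemma rel_mkS_R {s : signature} {R : sym s} (HR : 2 <= arity s R) {D} (d : D) e (x y : D) :
  rel (mkS R d e) R (pat x y) <-> e x y.
Proof.
  simpl; split.
  - intros (x' & y' & Hp & _ & He).
    destruct (pat_inj HR Hp) as [-> ->]; auto.
  - intros He; exists x, y; auto.
Qed.

Lemma rel_ext {s : signature} {A : structure s} {r} {t t' : fin (arity s r) -> A} :
  (forall i, t i = t' i) -> rel A r t -> rel A r t'.
Proof.
  intros H; replace t' with t; auto. extensionality i; auto.
Qed.

Lemma auto_mkS_edge {s : signature} {R : sym s} (HR : 2 <= arity s R) {D} (d : D) e (f : D -> D) :
  automorphism (mkS R d e) f -> forall x y, e x y <-> e (f x) (f y).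
Proof.
  intros [_ Hr] x y.
  rewrite <- (rel_mkS_R HR d e x y).
  rewrite (Hr R (pat x y)).
  rewrite <- (rel_mkS_R HR d e (f x) (f y)).
  split; apply rel_ext; intro i; unfold pat; destruct (Nat.eqb _ _); auto.
Qed.

Lemma mkS_auto {s : signature} (R : sym s) {D} (d : D) e (f g : D -> D) :
  (forall x, g (f x) = x) -> (forall y, f (g y) = y) ->
  (forall x y, e x y <-> e (f x) (f y)) -> automorphism (mkS R d e) f.
Proof.
  intros Hgf Hfg He. split.
  - exists g; auto.
  - intros r t; simpl; split.
    + intros (x & y & Hp & Hr & Hxy). exists (f x), (f y); split; [|split; [auto| apply (proj1 (He x y)); auto]].
      intro i; rewrite Hp; unfold pat; destruct (Nat.eqb _ _); auto.
    + intros (x & y & Hp & Hr & Hxy). exists (g x), (g y); split; [|split; auto].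
      * intro i. rewrite <- (Hgf (t i)), Hp; unfold pat; destruct (Nat.eqb _ _); auto.
      * apply (proj2 (He (g x) (g y))); rewrite !Hfg; auto.
Qed.

Lemma inf_support {T : Type} (f : T -> T) (h : nat -> T) :
  (forall i j, h i = h j -> i = j) -> (forall i, f (h i) <> h i) ->
  forall n, ~ card_is (support f) n.
Proof.
  intros Hinj Hs n (l & Hnd & Hlen & Hin).
  assert (Hnd2 : NoDup (map h (seq 0 (S n)))).
  { apply Injective_map_NoDup; [intros i j; apply Hinj | apply seq_NoDup]. }
  assert (Hincl : incl (map h (seq 0 (S n))) l).
  { intros x Hx. apply in_map_iff in Hx. destruct Hx as (i & <- & _). apply Hin. apply Hs. }
  pose proof (NoDup_incl_length Hnd2 Hincl). rewrite length_map, length_seq in H. lia.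
Qed.

Lemma card0_unique {T : Type} (f : T -> T) n :
  (forall x, f x = x) -> card_is (support f) n -> n = 0.
Proof.
  intros Hid (l & _ & Hlen & Hin). destruct l as [|x l]; simpl in *; auto.
  exfalso. apply (proj1 (Hin x)); auto.
Qed.

Lemma card0 {T : Type} (f : T -> T) :
  (forall x, f x = x) -> card_is (support f) 0.
Proof.
  intros Hid. exists []; repeat split; [constructor| |]; simpl; try tauto.
  intros H; apply H; auto.
Qed.

Lemma X0_of_M {s : signature} {X : nat -> Prop} {M : structure s} :
  aut_supports_in X M -> X 0.
Proof.
  intros H. destruct (H (fun x => x)) as (n & Hx & Hc).
  - split; [exists (fun x => x); auto | intros; reflexivity].
  - rewrite <- (card0_unique (fun x : M => x) n (fun _ => eq_refl) Hc); auto.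
Qed.


Definition eA (x y : nat) : Prop := y = S x.
Definition eB (b b' : nat + Z) : Prop :=
  match b, b' with
  | inl n, inl m => m = S n
  | inr z, inr w => w = (z + 1)%Z
  | _, _ => False
  end.

Definition cond1 (r : Z) (a : nat) (b : nat + Z) : Prop :=
  match b with
  | inl n => n = a \/ (r <= Z.of_nat n /\ r <= Z.of_nat a)%Z
  | inr _ => (r <= Z.of_nat a)%Z
  end.

Definition dB (b b' : nat + Z) : option Z :=
  match b, b' with
  | inl n, inl m => Some (Z.of_nat m - Z.of_nat n)%Z
  | inr z, inr w => Some (w - z)%Z
  | _, _ => None
  end.

Definition cond2 (r : Z) (a a' : nat) (b b' : nat + Z) : Prop :=
  match dB b b' with
  | Some d => d = (Z.of_nat a' - Z.of_nat a)%Z \/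
              (r <= Z.abs d /\ r <= Z.abs (Z.of_nat a' - Z.of_nat a))%Z
  | None => (r <= Z.abs (Z.of_nat a' - Z.of_nat a))%Z
  end.

Definition Inv (r : Z) (V : list nat) (ea : nat -> nat) (eb : nat -> nat + Z) : Prop :=
  (forall y, In y V -> cond1 r (ea y) (eb y)) /\
  (forall y z, In y V -> In z V -> cond2 r (ea y) (ea z) (eb y) (eb z)).

Ltac dcase b := destruct b as [?n|?z].

Lemma cond2_sym r a a' b b' : cond2 r a a' b b' -> cond2 r a' a b' b.
Proof. unfold cond2, dB; destruct b, b'; lia. Qed.

Lemma cond1_mono r r' a b : (r' <= r)%Z -> cond1 r a b -> cond1 r' a b.
Proof. unfold cond1; destruct b; lia. Qed.

Lemma cond2_mono r r' a a' b b' : (r' <= r)%Z -> cond2 r a a' b b' -> cond2 r' a a' b b'.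
Proof. unfold cond2, dB; destruct b, b'; lia. Qed.

Lemma cond2_eq r a a' b b' : (2 <= r)%Z -> cond2 r a a' b b' -> (a = a' <-> b = b').
Proof.
  unfold cond2, dB; destruct b as [n|z], b' as [m|w]; intros Hr H; split; intro E;
    try discriminate; try (injection E; intro E'); subst; try lia.
  - f_equal; lia.
  - f_equal; lia.
Qed.

Lemma cond2_edge r a a' b b' : (2 <= r)%Z -> cond2 r a a' b b' -> (eA a a' <-> eB b b').
Proof.
  unfold cond2, dB, eA, eB; destruct b as [n|z], b' as [m|w]; intros Hr H; split; intro E;
    subst; try lia; tauto.
Qed.

Definition zval (b : nat + Z) : Z := match b with inl _ => 0%Z | inr z => z end.
Definition sumz (V : list nat) (eb : nat -> nat + Z) : Z :=
  fold_right (fun y acc => Z.abs (zval (eb y)) + acc)%Z 0%Z V.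
Definition sumA (V : list nat) (ea : nat -> nat) : Z :=
  fold_right (fun y acc => Z.of_nat (ea y) + acc)%Z 0%Z V.

Lemma sumz_ge V eb y : In y V -> (Z.abs (zval (eb y)) <= sumz V eb)%Z.
Proof.
  induction V as [|v V IH]; simpl; [tauto|].
  assert (0 <= sumz V eb)%Z.
  { clear. induction V; simpl; lia. }
  intros [->|H']; [lia|]. specialize (IH H'). lia.
Qed.

Lemma sumA_ge V ea y : In y V -> (Z.of_nat (ea y) <= sumA V ea)%Z.
Proof.
  induction V as [|v V IH]; simpl; [tauto|].
  assert (0 <= sumA V ea)%Z.
  { clear. induction V; simpl; lia. }
  intros [->|H']; [lia|]. specialize (IH H'). lia.
Qed.

Definition shift (b : nat + Z) (d : Z) : nat + Z :=
  match b with inl n => inl (Z.to_nat (Z.of_nat n + d)) | inr z => inr (z + d)%Z end.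

Lemma forth r V ea eb a : (1 <= r)%Z -> Inv (2 * r) V ea eb ->
  exists b, cond1 r a b /\ forall z, In z V -> cond2 r a (ea z) b (eb z).
Proof.
  intros Hr [H1 H2].
  destruct (Z_lt_le_dec (Z.of_nat a) r) as [Ha|Ha].
  - exists (inl a). split; [left; auto|].
    intros z Hz. specialize (H1 z Hz). unfold cond1, cond2, dB in *.
    destruct (eb z); lia.
  - destruct (classic (exists y, In y V /\ (Z.abs (Z.of_nat a - Z.of_nat (ea y)) < r)%Z))
      as [(y & Hy & Hd)|Hn].
    + exists (shift (eb y) (Z.of_nat a - Z.of_nat (ea y))%Z).
      pose proof (H1 y Hy) as H1y. split.
      * unfold cond1, shift in *. destruct (eb y); lia.
      * intros z Hz. pose proof (H2 y z Hy Hz) as H2yz. pose proof (H1 z Hz) as H1z.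
        unfold cond1, cond2, dB, shift in *. destruct (eb y), (eb z); lia.
    + exists (inr (r + sumz V eb)%Z). split.
      * simpl; lia.
      * intros z Hz.
        assert (Hf : (r <= Z.abs (Z.of_nat a - Z.of_nat (ea z)))%Z).
        { destruct (Z_lt_le_dec (Z.abs (Z.of_nat a - Z.of_nat (ea z))) r); auto.
          exfalso; apply Hn; eauto. }
        pose proof (sumz_ge V eb z Hz).
        unfold cond2, dB, zval in *. destruct (eb z); lia.
Qed.

Lemma back r V ea eb b : (1 <= r)%Z -> Inv (2 * r) V ea eb ->
  exists a, cond1 r a b /\ forall z, In z V -> cond2 r a (ea z) b (eb z).
Proof.
  intros Hr [H1 H2].
  destruct (classic (exists m, b = inl m /\ (Z.of_nat m < r)%Z)) as [(m & -> & Hm)|Hnm].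
  - exists m. split; [left; auto|].
    intros z Hz. specialize (H1 z Hz). unfold cond1, cond2, dB in *.
    destruct (eb z); lia.
  - destruct (classic (exists y d, In y V /\ dB (eb y) b = Some d /\ (Z.abs d < r)%Z))
      as [(y & d & Hy & Hdb & Hd)|Hn].
    + exists (Z.to_nat (Z.of_nat (ea y) + d)).
      pose proof (H1 y Hy) as H1y. split.
      * unfold cond1, dB in *. destruct (eb y), b; try discriminate; injection Hdb; intro; lia.
      * intros z Hz. pose proof (H2 y z Hy Hz) as H2yz. pose proof (H1 z Hz) as H1z.
        unfold cond1, cond2, dB in *. destruct (eb y), (eb z), b; try discriminate;
          injection Hdb; intro; lia.
    + exists (Z.to_nat (r + sumA V ea)).
      assert (0 <= sumA V ea)%Z by (clear; induction V; simpl; lia). split.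
      * unfold cond1. destruct b as [m|w]; [|lia].
        right. destruct (Z_lt_le_dec (Z.of_nat m) r); [|lia]. exfalso; apply Hnm; eauto.
      * intros z Hz. pose proof (sumA_ge V ea z Hz).
        unfold cond2.
        assert (Hf : forall d, dB (b) (eb z) = Some d -> (r <= Z.abs d)%Z).
        { intros d Hd. destruct (Z_lt_le_dec (Z.abs d) r); auto.
          exfalso; apply Hn. exists z, (- d)%Z. split; [auto|]. split; [|lia].
          unfold dB in *; destruct b, (eb z); try discriminate; injection Hd; intro; f_equal; lia. }
        destruct (dB b (eb z)) eqn:E.
        -- right; split; [apply Hf; auto| lia].
        -- lia.
Qed.

Lemma cond2_refl r a b : (0 <= r)%Z -> cond2 r a a b b.
Proof. unfold cond2, dB; destruct b; lia. Qed.

Lemma extend r V ea eb x a b : (0 <= r)%Z -> Inv (2 * r) V ea eb -> cond1 r a b ->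
  (forall z, In z V -> cond2 r a (ea z) b (eb z)) ->
  Inv r (x :: V) (update ea x a) (update eb x b).
Proof.
  intros Hr [H1 H2] Hc1 Hc2. split.
  - intros y Hy. unfold update. destruct (Nat.eqb y x) eqn:E; auto.
    apply Nat.eqb_neq in E. destruct Hy as [->|Hy]; [congruence|].
    apply cond1_mono with (2 * r)%Z; [lia|auto].
  - intros y z Hy Hz. unfold update.
    destruct (Nat.eqb y x) eqn:E1, (Nat.eqb z x) eqn:E2;
      try apply Nat.eqb_neq in E1; try apply Nat.eqb_neq in E2.
    + apply cond2_refl; auto.
    + destruct Hz as [->|Hz]; [congruence|]. auto.
    + destruct Hy as [->|Hy]; [congruence|]. apply cond2_sym; auto.
    + destruct Hy as [->|Hy]; [congruence|]. destruct Hz as [->|Hz]; [congruence|].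
      apply cond2_mono with (2 * r)%Z; [lia|auto].
Qed.

Lemma atom_transfer {s} {R : sym s} (HR : 2 <= arity s R) {DA DB : Type} (dA : DA) (dB' : DB)
  (eA' : DA -> DA -> Prop) (eB' : DB -> DB -> Prop) r (v : fin (arity s r) -> nat)
  (ea : nat -> DA) (eb : nat -> DB) :
  (forall i j, ea (v i) = ea (v j) -> eb (v i) = eb (v j)) ->
  (forall i j, eA' (ea (v i)) (ea (v j)) -> eB' (eb (v i)) (eb (v j))) ->
  rel (mkS R dA eA') r (fun i => ea (v i)) -> rel (mkS R dB' eB') r (fun i => eb (v i)).
Proof.
  intros Heq Hed (x & y & Hp & Hr & Hxy). simpl. subst r.
  pose proof (Hp (f0 HR)) as Hx. pose proof (Hp (f1 HR)) as Hy.
  unfold pat in Hx, Hy; simpl in Hx, Hy.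
  exists (eb (v (f0 HR))), (eb (v (f1 HR))). split; [|split; [reflexivity|]].
  - intro i. unfold pat. destruct (Nat.eqb (proj1_sig i) 0) eqn:E.
    + apply Nat.eqb_eq in E. f_equal. f_equal. apply fin_eq. simpl. auto.
    + apply Heq. rewrite Hp, Hy. unfold pat; rewrite E; auto.
  - apply Hed. rewrite Hx, Hy. auto.
Qed.

Fixpoint qd {s} (phi : formula s) : nat :=
  match phi with
  | FNot p => qd p
  | FAnd p q | FOr p q | FImp p q => Nat.max (qd p) (qd q)
  | FAll _ p | FEx _ p => S (qd p)
  | _ => 0
  end.

Fixpoint rk (k : nat) : Z := match k with 0 => 2%Z | S k => (2 * rk k)%Z end.
Lemma rk_ge k : (2 <= rk k)%Z.
Proof. induction k; cbn [rk]; lia. Qed.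

Definition A1 {s} (R : sym s) : structure s := mkS R 0 eA.
Definition B1 {s} (R : sym s) : structure s := mkS R (inl 0 : nat + Z) eB.

Lemma free_sub_all {s} (x : nat) (p : formula s) V :
  (forall y, free y (FAll x p) -> In y V) -> forall y, free y p -> In y (x :: V).
Proof.
  intros H y Hy. destruct (Nat.eq_dec x y) as [->|Hne]; [left; auto|right; apply H; simpl; auto].
Qed.
Lemma free_sub_ex {s} (x : nat) (p : formula s) V :
  (forall y, free y (FEx x p) -> In y V) -> forall y, free y p -> In y (x :: V).
Proof.
  intros H y Hy. destruct (Nat.eq_dec x y) as [->|Hne]; [left; auto|right; apply H; simpl; auto].
Qed.

Theorem ef {s} {R : sym s} (HR : 2 <= arity s R) (phi : formula s) :
  forall k V ea eb, (forall y, free y phi -> In y V) -> qd phi <= k ->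
  Inv (rk k) V ea eb -> (sat (A1 R) ea phi <-> sat (B1 R) eb phi).
Proof.
  induction phi as [r v|x y| |p IH|p IHp q IHq|p IHp q IHq|p IHp q IHq|x p IH|x p IH];
    intros k V ea eb Hf Hq HI; pose proof (rk_ge k) as Hrk; simpl in Hq |- *.
  - assert (HV : forall i, In (v i) V) by (intro i; apply Hf; simpl; eauto).
    destruct HI as [_ H2].
    split; [apply (atom_transfer HR 0 (inl 0 : nat + Z) eA eB)|
            apply (atom_transfer HR (inl 0 : nat + Z) 0 eB eA)]; intros i j;
      pose proof (H2 (v i) (v j) (HV i) (HV j)) as C;
      first [apply (cond2_eq _ _ _ _ _ Hrk C) | apply (cond2_edge _ _ _ _ _ Hrk C)].
  - destruct HI as [_ H2]. apply (cond2_eq _ _ _ _ _ Hrk). apply H2; apply Hf; simpl; auto.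
  - tauto.
  - rewrite (IH k V ea eb); auto; tauto.
  - assert (E1 : sat (A1 R) ea p <-> sat (B1 R) eb p)
      by (apply (IHp k V); auto; [intros; apply Hf; simpl; auto|lia]).
    assert (E2 : sat (A1 R) ea q <-> sat (B1 R) eb q)
      by (apply (IHq k V); auto; [intros; apply Hf; simpl; auto|lia]).
    tauto.
  - assert (E1 : sat (A1 R) ea p <-> sat (B1 R) eb p)
      by (apply (IHp k V); auto; [intros; apply Hf; simpl; auto|lia]).
    assert (E2 : sat (A1 R) ea q <-> sat (B1 R) eb q)
      by (apply (IHq k V); auto; [intros; apply Hf; simpl; auto|lia]).
    tauto.
  - assert (E1 : sat (A1 R) ea p <-> sat (B1 R) eb p)
      by (apply (IHp k V); auto; [intros; apply Hf; simpl; auto|lia]).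
    assert (E2 : sat (A1 R) ea q <-> sat (B1 R) eb q)
      by (apply (IHq k V); auto; [intros; apply Hf; simpl; auto|lia]).
    tauto.
  - destruct k as [|k]; [lia|]. simpl in HI. pose proof (rk_ge k).
    split.
    + intros Hs b. destruct (back (rk k) V ea eb b ltac:(lia) HI) as (a & Ha1 & Ha2).
      apply (IH k (x :: V) (update ea x a) (update eb x b)); auto.
      * apply free_sub_all; auto.
      * lia.
      * apply extend; auto; lia.
    + intros Hs a. destruct (forth (rk k) V ea eb a ltac:(lia) HI) as (b & Hb1 & Hb2).
      apply (IH k (x :: V) (update ea x a) (update eb x b)); auto.
      * apply free_sub_all; auto.
      * lia.
      * apply extend; auto; lia.
  - destruct k as [|k]; [lia|]. simpl in HI. pose proof (rk_ge k).
    split.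
    + intros [a Hs]. destruct (forth (rk k) V ea eb a ltac:(lia) HI) as (b & Hb1 & Hb2).
      exists b. apply (IH k (x :: V) (update ea x a) (update eb x b)); auto.
      * apply free_sub_ex; auto.
      * lia.
      * apply extend; auto; lia.
    + intros [b Hs]. destruct (back (rk k) V ea eb b ltac:(lia) HI) as (a & Ha1 & Ha2).
      exists a. apply (IH k (x :: V) (update ea x a) (update eb x b)); auto.
      * apply free_sub_ex; auto.
      * lia.
      * apply extend; auto; lia.
Qed.

Lemma A1_rigid {s} {R : sym s} (HR : 2 <= arity s R) (f : nat -> nat) :
  automorphism (A1 R) f -> forall x, f x = x.
Proof.
  intros Haut. pose proof (auto_mkS_edge HR 0 eA f Haut) as He.
  destruct Haut as [[g [Hgf Hfg]] _].
  assert (H0 : f 0 = 0).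
  { destruct (f 0) as [|m] eqn:E; auto. exfalso.
    assert (Hm : eA (f (g m)) (f 0)) by (rewrite Hfg, E; reflexivity).
    apply He in Hm. unfold eA in Hm. discriminate. }
  induction x as [|x IH]; auto.
  assert (Hx : eA x (S x)) by reflexivity. apply He in Hx. unfold eA in Hx. rewrite Hx, IH; auto.
Qed.

Lemma A1_P {s} {R : sym s} (HR : 2 <= arity s R) (X : nat -> Prop) :
  X 0 -> aut_supports_in X (A1 R).
Proof.
  intros H0 f Hf. exists 0; split; auto. apply card0. apply (A1_rigid HR f Hf).
Qed.

Definition shB (b : nat + Z) : nat + Z := match b with inl n => inl n | inr z => inr (z + 1)%Z end.
Definition shB' (b : nat + Z) : nat + Z := match b with inl n => inl n | inr z => inr (z - 1)%Z end.

Lemma B1_notP {s} {R : sym s} (X : nat -> Prop) : ~ aut_supports_in X (B1 R).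
Proof.
  intros H. destruct (H shB) as (n & _ & Hc).
  - apply (mkS_auto R (inl 0 : nat + Z) eB shB shB').
    + intros [x|x]; simpl; f_equal; lia.
    + intros [x|x]; simpl; f_equal; lia.
    + intros [x|x] [y|y]; simpl; lia.
  - apply (inf_support shB (fun i => inr (Z.of_nat i)) ) in Hc; auto.
    + intros i j E. injection E. lia.
    + intros i E. simpl in E. injection E. lia.
Qed.

Lemma part1 {s} {R : sym s} (HR : 2 <= arity s R) (X : nat -> Prop) :
  X 0 -> ~ FO_expressible (@aut_supports_in s X).
Proof.
  intros H0 (phi & Hs & Hphi).
  apply (B1_notP (R := R) X). apply Hphi.
  assert (HA : sat_sentence (A1 R) phi) by (apply Hphi; apply A1_P; auto).
  intro eb. apply (ef HR phi (qd phi) [] (fun _ => 0) eb).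
  - intros y Hy. exfalso; apply (Hs y Hy).
  - lia.
  - split; simpl; tauto.
  - apply HA.
Qed.


Definition edgeA {s} (R : sym s) (A : structure s) (x y : A) : Prop := rel A R (pat x y).
Definition E {s} (R : sym s) (j k : nat) : formula s := FRel _ R (pat j k).
Arguments E : simpl never.

Lemma upd_same {T} (env : nat -> T) x a : update env x a x = a.
Proof. unfold update; rewrite Nat.eqb_refl; auto. Qed.
Lemma upd_other {T} (env : nat -> T) x a y : y <> x -> update env x a y = env y.
Proof. intros H; unfold update; apply Nat.eqb_neq in H; rewrite H; auto. Qed.

Lemma sat_E {s} (R : sym s) (A : structure s) env j k :
  sat A env (E R j k) <-> edgeA R A (env j) (env k).
Proof.
  unfold E, edgeA; simpl; split; apply rel_ext; intro i; unfold pat; destruct (Nat.eqb _ _); auto.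
Qed.

Lemma free_E {s} (R : sym s) x j k : free x (E R j k) -> x = j \/ x = k.
Proof.
  unfold E; simpl. intros [i Hi]. unfold pat in Hi. destruct (Nat.eqb _ _); auto.
Qed.

Definition Tr {s} : formula s := FNot (FFalse _).
Definition out1 {s} (R : sym s) : formula s :=
  FAll 0 (FAll 1 (FAll 2 (FImp (E R 0 1) (FImp (E R 0 2) (FEq _ 1 2))))).
Definition in1 {s} (R : sym s) : formula s :=
  FAll 0 (FAll 1 (FAll 2 (FImp (E R 1 0) (FImp (E R 2 0) (FEq _ 1 2))))).
Definition startF {s} (R : sym s) (j w : nat) : formula s := FNot (FEx w (E R w j)).
Definition two {s} (R : sym s) : formula s :=
  FEx 0 (FEx 1 (FAnd (FNot (FEq _ 0 1)) (FAnd (startF R 0 2) (startF R 1 2)))).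
Fixpoint ch {s} (R : sym s) (n k : nat) : formula s :=
  match n with
  | 0 => Tr
  | S n => FEx (S k) (FAnd (E R k (S k)) (ch R n (S k)))
  end.
Definition chainF {s} (R : sym s) (n : nat) : formula s := FAll 0 (FImp (startF R 0 1) (ch R n 0)).
Definition vid (k : nat) : fin k -> nat := fun i => proj1_sig i.
Fixpoint alls {s} (k : nat) (phi : formula s) : formula s :=
  match k with 0 => phi | S k => alls k (FAll k phi) end.
Definition shapeF {s} (R : sym s) (i : nat) : formula s :=
  if andb (1 <=? i) (i <? arity s R) then alls (arity s R) (FImp (FRel _ R (vid _)) (FEq _ i 1)) else Tr.
Definition emptyF {s} (o : option (sym s)) : formula s :=
  match o with Some S0 => alls (arity s S0) (FNot (FRel _ S0 (vid _))) | None => Tr end.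

Definition start {s} (R : sym s) (A : structure s) (a : A) : Prop := ~ exists y, edgeA R A y a.
Fixpoint Pch {s} (R : sym s) (A : structure s) (n : nat) (x : A) : Prop :=
  match n with 0 => True | S n => exists y, edgeA R A x y /\ Pch R A n y end.

Lemma sat_start {s} (R : sym s) (A : structure s) env j w :
  w <> j -> (sat A env (startF R j w) <-> start R A (env j)).
Proof.
  intros Hw. unfold startF, start. cbn [sat]. split; intros H [a Ha]; apply H; exists a.
  - rewrite sat_E, upd_same, upd_other; auto.
  - rewrite sat_E, upd_same, upd_other in Ha; auto.
Qed.

Lemma sat_ch {s} (R : sym s) (A : structure s) n : forall k env,
  sat A env (ch R n k) <-> Pch R A n (env k).
Proof.
  induction n as [|n IH]; intros k env; cbn [sat ch].
  - unfold Tr; simpl; tauto.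
  - split; intros [a Ha]; exists a.
    + rewrite sat_E, IH, upd_same, upd_other in Ha by lia. auto.
    + rewrite sat_E, IH, upd_same, upd_other by lia. auto.
Qed.

Definition mix {T} (k : nat) (g env : nat -> T) : nat -> T :=
  fun j => if j <? k then g j else env j.

Lemma sat_alls {s} (A : structure s) k : forall (phi : formula s) env,
  sat A env (alls k phi) <-> forall g, sat A (mix k g env) phi.
Proof.
  induction k as [|k IH]; intros phi env; simpl.
  - split; intros H.
    + intros g. replace (mix 0 g env) with env; auto.
    + apply (H env).
  - rewrite IH. simpl. split; intros H g.
    + specialize (H g (g k)).
      replace (mix (S k) g env) with (update (mix k g env) k (g k)); auto.
      extensionality j; unfold mix, update.
      destruct (Nat.eqb_spec j k), (Nat.ltb_spec j k), (Nat.ltb_spec j (S k)); subst; auto; lia.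
    + intros a. specialize (H (update g k a)).
      replace (update (mix k g env) k a) with (mix (S k) (update g k a) env); auto.
      extensionality j; unfold mix, update.
      destruct (Nat.eqb_spec j k), (Nat.ltb_spec j k), (Nat.ltb_spec j (S k)); subst; auto; lia.
Qed.

Lemma free_alls {s} k : forall (phi : formula s) x, free x (alls k phi) -> k <= x /\ free x phi.
Proof.
  induction k as [|k IH]; intros phi x H; simpl in H.
  - split; auto; lia.
  - apply IH in H. destruct H as [H1 [H2 H3]]. split; auto; lia.
Qed.

Lemma sat_out1 {s} (R : sym s) (A : structure s) :
  sat_sentence A (out1 R) <-> forall x y z : A, edgeA R A x y -> edgeA R A x z -> y = z.
Proof.
  unfold sat_sentence, out1. cbn [sat]. setoid_rewrite sat_E. unfold update; simpl.
  split; intros H.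
  - intros x y z. apply (H (fun _ => x) x y z).
  - intros env x y z. apply H.
Qed.

Lemma sat_in1 {s} (R : sym s) (A : structure s) :
  sat_sentence A (in1 R) <-> forall x y z : A, edgeA R A y x -> edgeA R A z x -> y = z.
Proof.
  unfold sat_sentence, in1. cbn [sat]. setoid_rewrite sat_E. unfold update; simpl.
  split; intros H.
  - intros x y z. apply (H (fun _ => x) x y z).
  - intros env x y z. apply H.
Qed.

Lemma sat_two {s} (R : sym s) (A : structure s) :
  sat_sentence A (two R) <-> exists a b : A, a <> b /\ start R A a /\ start R A b.
Proof.
  unfold sat_sentence, two. cbn [sat].
  split; intros H.
  - destruct (H (fun _ => dom_inh A)) as (a & b & H1 & H2 & H3).
    rewrite sat_start in H2, H3 by lia.
    unfold update in *; simpl in *. exists a, b; auto.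
  - intros env. destruct H as (a & b & H1 & H2 & H3). exists a, b.
    rewrite !sat_start by lia. unfold update; simpl; auto.
Qed.

Lemma sat_chain {s} (R : sym s) (A : structure s) n :
  sat_sentence A (chainF R n) <-> forall a : A, start R A a -> Pch R A n a.
Proof.
  unfold sat_sentence, chainF. cbn [sat].
  split; intros H.
  - intros a Ha. specialize (H (fun _ => a) a). rewrite sat_start, sat_ch in H by lia.
    unfold update in H; simpl in H; auto.
  - intros env a. rewrite sat_start, sat_ch by lia. unfold update; simpl; auto.
Qed.

Lemma mix_lt {T} k (g env : nat -> T) j : j < k -> mix k g env j = g j.
Proof. intros H; unfold mix; apply Nat.ltb_lt in H; rewrite H; auto. Qed.

Lemma sat_shape {s} (R : sym s) (A : structure s) i :
  1 <= i < arity s R ->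
  (sat_sentence A (shapeF R i) <->
   forall g : nat -> A, rel A R (fun j => g (proj1_sig j)) -> g i = g 1).
Proof.
  intros Hi. unfold sat_sentence, shapeF.
  replace (andb (1 <=? i) (i <? arity s R)) with true
    by (symmetry; apply andb_true_intro; split; [apply Nat.leb_le|apply Nat.ltb_lt]; lia).
  setoid_rewrite sat_alls. cbn [sat].
  split; intros H.
  - intros g Hg. specialize (H (fun _ => dom_inh A) g).
    rewrite !mix_lt in H by lia. apply H.
    revert Hg; apply rel_ext. intro j; unfold vid; rewrite mix_lt; auto. apply (proj2_sig j).
  - intros env g Hg. rewrite !mix_lt by lia. apply H.
    revert Hg; apply rel_ext. intro j; unfold vid; rewrite mix_lt; auto. apply (proj2_sig j).
Qed.

Lemma sat_empty {s} (A : structure s) (S0 : sym s) :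
  sat_sentence A (emptyF (Some S0)) <->
   forall g : nat -> A, ~ rel A S0 (fun j => g (proj1_sig j)).
Proof.
  unfold sat_sentence, emptyF. setoid_rewrite sat_alls. cbn [sat].
  split; intros H.
  - intros g Hg. apply (H (fun _ => dom_inh A) g).
    revert Hg; apply rel_ext. intro j; unfold vid; rewrite mix_lt; auto. apply (proj2_sig j).
  - intros env g Hg. apply (H g).
    revert Hg; apply rel_ext. intro j; unfold vid; rewrite mix_lt; auto. apply (proj2_sig j).
Qed.

Lemma free_ch {s} (R : sym s) n : forall k x, free x (ch R n k) -> x = k.
Proof.
  induction n as [|n IH]; intros k x H; cbn [ch free] in H.
  - unfold Tr in H; cbn [free] in H. destruct H.
  - destruct H as [H1 [H|H]].
    + apply free_E in H; lia.
    + apply IH in H; lia.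
Qed.

Ltac free_tac := repeat match goal with
 | H : _ /\ _ |- _ => destruct H
 | H : _ \/ _ |- _ => destruct H
 | H : free _ (E _ _ _) |- _ => apply free_E in H
 | H : free _ (ch _ _ _) |- _ => apply free_ch in H
 | H : False |- _ => destruct H
 end; try lia.

Lemma sent_Tr {s} : is_sentence (@Tr s).
Proof. intros x H. unfold Tr in H; cbn [free] in H; auto. Qed.

Lemma sent_out1 {s} (R : sym s) : is_sentence (out1 R).
Proof. intros x H. unfold out1 in H; cbn [free] in H. free_tac. Qed.
Lemma sent_in1 {s} (R : sym s) : is_sentence (in1 R).
Proof. intros x H. unfold in1 in H; cbn [free] in H. free_tac. Qed.
Lemma sent_two {s} (R : sym s) : is_sentence (two R).
Proof. intros x H. unfold two, startF in H; cbn [free] in H. free_tac. Qed.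
Lemma sent_chain {s} (R : sym s) n : is_sentence (chainF R n).
Proof. intros x H. unfold chainF, startF in H; cbn [free] in H. free_tac. Qed.
Lemma sent_shape {s} (R : sym s) i : is_sentence (shapeF R i).
Proof.
  intros x H. unfold shapeF in H.
  destruct (andb (1 <=? i) (i <? arity s R)) eqn:E1; [|apply (sent_Tr x H)].
  apply andb_prop in E1; destruct E1 as [E0 E1]; apply Nat.ltb_lt in E1; apply Nat.leb_le in E0.
  apply free_alls in H. destruct H as [Hk H]. cbn [free] in H.
  destruct H as [[j Hj]|[H|H]]; try lia.
  unfold vid in Hj. pose proof (proj2_sig j) as Hj2; cbv beta in Hj2; lia.
Qed.
Lemma sent_empty {s} (o : option (sym s)) : is_sentence (emptyF o).
Proof.
  intros x H. destruct o as [S0|]; [|apply (sent_Tr x H)]. cbn [emptyF] in H.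
  apply free_alls in H. destruct H as [Hk H]. cbn [free] in H.
  destruct H as [j Hj]. unfold vid in Hj. pose proof (proj2_sig j) as Hj2; cbv beta in Hj2; lia.
Qed.

Fixpoint dec4 (m : nat) : nat * nat :=
  match m with
  | 0 => (0, 0) | 1 => (1, 0) | 2 => (2, 0) | 3 => (3, 0)
  | S (S (S (S k))) => let (c, q) := dec4 k in (c, S q)
  end.

Lemma dec4_spec q c : c < 4 -> dec4 (4 * q + c) = (c, q).
Proof.
  intros Hc. induction q as [|q IH].
  - destruct c as [|[|[|[|c]]]]; auto; lia.
  - replace (4 * S q + c) with (S (S (S (S (4 * q + c))))) by lia.
    cbn [dec4]. rewrite IH. auto.
Qed.

Lemma dec4_le m : snd (dec4 m) <= m.
Proof.
  induction m as [m IH] using lt_wf_ind.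
  destruct m as [|[|[|[|k]]]]; simpl; auto.
  specialize (IH k ltac:(lia)). destruct (dec4 k); simpl in *; lia.
Qed.

Definition sym_of {s} (R : sym s) (enc : sym s -> nat) (n : nat) : option (sym s) :=
  match excluded_middle_informative (exists S0, enc S0 = n /\ S0 <> R) with
  | left H => Some (proj1_sig (constructive_indefinite_description _ H))
  | right _ => None
  end.

Lemma sym_of_enc {s} (R : sym s) (enc : sym s -> nat) (Hinj : forall a b, enc a = enc b -> a = b)
  (S0 : sym s) : S0 <> R -> sym_of R enc (enc S0) = Some S0.
Proof.
  intros Hne. unfold sym_of. destruct (excluded_middle_informative _) as [H|H].
  - destruct (constructive_indefinite_description _ H) as [S1 [H1 H2]]; simpl. f_equal; auto.
  - exfalso; apply H; eauto.
Qed.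

Lemma sym_of_ne {s} (R : sym s) enc n S0 : sym_of R enc n = Some S0 -> S0 <> R.
Proof.
  unfold sym_of. destruct (excluded_middle_informative _) as [H|H]; [|discriminate].
  destruct (constructive_indefinite_description _ H) as [S1 [H1 H2]]; simpl.
  intro E'; injection E'; intros <-; auto.
Qed.

Definition basic {s} (R : sym s) (b : nat) : formula s :=
  match b with 0 => out1 R | 1 => in1 R | _ => two R end.

Definition fo {s} (R : sym s) (enc : sym s -> nat) (m : nat) : formula s :=
  match dec4 m with
  | (0, q) => basic R q
  | (1, q) => chainF R q
  | (2, q) => shapeF R q
  | (_, q) => emptyF (sym_of R enc q)
  end.

Lemma sent_fo {s} (R : sym s) enc m : is_sentence (fo R enc m).
Proof.
  unfold fo. destruct (dec4 m) as [[|[|[|c]]] q].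
  - destruct q as [|[|q]]; [apply sent_out1|apply sent_in1|apply sent_two].
  - apply sent_chain.
  - apply sent_shape.
  - apply sent_empty.
Qed.

Definition eN (N : nat) (x y : nat) : Prop := y = S x /\ x <> N.
Definition BN {s} (R : sym s) (N : nat) : structure s := mkS R 0 (eN N).

Lemma edge_BN {s} {R : sym s} (HR : 2 <= arity s R) N x y :
  edgeA R (BN R N) x y <-> y = S x /\ x <> N.
Proof. unfold edgeA, BN. rewrite (rel_mkS_R HR). reflexivity. Qed.

Lemma sat_Tr {s} (A : structure s) : sat_sentence A Tr.
Proof. intros env; cbn; auto. Qed.

Lemma Pch_BN {s} {R : sym s} (HR : 2 <= arity s R) N n :
  forall x, x + n <= N \/ N < x -> Pch R (BN R N) n x.
Proof.
  induction n as [|n IH]; intros x Hx; simpl; auto.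
  exists (S x). split; [apply (edge_BN HR); split; [auto|lia]|]. apply IH. lia.
Qed.

Lemma BN_fo {s} {R : sym s} (HR : 2 <= arity s R) enc N m :
  snd (dec4 m) <= N -> sat_sentence (BN R N) (fo R enc m).
Proof.
  unfold fo. destruct (dec4 m) as [c q]; simpl. intro Hq.
  destruct c as [|[|[|c]]].
  - destruct q as [|[|q]]; cbn [basic].
    + apply sat_out1. intros x y z H1 H2. apply (edge_BN HR) in H1, H2. lia.
    + apply sat_in1. intros x y z H1 H2. apply (edge_BN HR) in H1, H2. lia.
    + apply sat_two. exists 0, (S N). split; [lia|].
      split; intros [y Hy]; apply (edge_BN HR) in Hy; lia.
  - apply sat_chain. intros a Ha. apply (Pch_BN HR).
    destruct a as [|p]; [lia|].
    destruct (Nat.eq_dec p N) as [->|Hp]; [lia|].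
    exfalso; apply Ha; exists p. apply (edge_BN HR). auto.
  - unfold shapeF. destruct (andb (1 <=? q) (q <? arity s R)) eqn:E1; [|apply sat_Tr].
    apply andb_prop in E1; destruct E1 as [E0 E1]; apply Nat.ltb_lt in E1; apply Nat.leb_le in E0.
    pose proof (sat_shape R (BN R N) q) as Hs. unfold shapeF in Hs.
    rewrite (proj2 (Nat.ltb_lt _ _) E1), (proj2 (Nat.leb_le _ _) E0) in Hs. simpl in Hs.
    apply Hs; [lia|]. intros g (x & y & Hp & _ & _).
    pose proof (Hp (exist (fun i => i < arity s R) q E1)) as Hq1.
    pose proof (Hp (f1 HR)) as Hq2. unfold pat in Hq1, Hq2; simpl in Hq1, Hq2.
    destruct q as [|q]; [lia|]. simpl in Hq1. congruence.
  - destruct (sym_of R enc q) as [S0|] eqn:ES; [|apply sat_Tr].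
    apply sat_empty. intros g (x & y & _ & HS & _). apply (sym_of_ne R enc q S0 ES HS).
Qed.

Lemma BN_rigid {s} {R : sym s} (HR : 2 <= arity s R) N (f : nat -> nat) :
  automorphism (BN R N) f -> forall x, f x = x.
Proof.
  intros Haut. pose proof (auto_mkS_edge HR 0 (eN N) f Haut) as He.
  destruct Haut as [[g [Hgf Hfg]] _]. unfold eN in He.
  assert (HN : f N = N).
  { destruct (Nat.eq_dec (f N) N) as [|Hne]; auto. exfalso.
    pose proof (proj2 (He N (g (S (f N))))) as H2. rewrite Hfg in H2.
    specialize (H2 (conj eq_refl Hne)). lia. }
  assert (Hdown : forall d, d <= N -> f (N - d) = N - d).
  { induction d as [|d IH]; intros Hd.
    - rewrite Nat.sub_0_r; auto.
    - assert (H1 : N - d = S (N - S d) /\ N - S d <> N) by lia.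
      apply He in H1. rewrite IH in H1 by lia. lia. }
  assert (HSN : f (S N) = S N).
  { destruct (f (S N)) as [|p] eqn:Ep.
    - exfalso. assert (f 0 = 0) by (pose proof (Hdown N (le_n N)) as HH; rewrite Nat.sub_diag in HH; auto).
      assert (E2 : g (f (S N)) = g (f 0)) by (rewrite Ep, H; reflexivity). rewrite !Hgf in E2. discriminate.
    - destruct (Nat.eq_dec p N) as [->|Hp]; auto. exfalso.
      pose proof (proj2 (He (g p) (S N))) as H2. rewrite Hfg, Ep in H2.
      specialize (H2 (conj eq_refl Hp)). lia. }
  assert (Hup : forall j, f (S N + j) = S N + j).
  { induction j as [|j IH]; [rewrite Nat.add_0_r; auto|].
    assert (H1 : S N + S j = S (S N + j) /\ S N + j <> N) by lia.
    apply He in H1. rewrite IH in H1. lia. }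
  intros x. destruct (le_lt_dec x N).
  - replace x with (N - (N - x)) by lia. apply Hdown; lia.
  - replace x with (S N + (x - S N)) by lia. apply Hup.
Qed.

Definition swp {T : Type} (c1 c2 : nat -> T) (x : T) : T :=
  match excluded_middle_informative (exists i, c1 i = x) with
  | left H => c2 (proj1_sig (constructive_indefinite_description _ H))
  | right _ =>
    match excluded_middle_informative (exists i, c2 i = x) with
    | left H => c1 (proj1_sig (constructive_indefinite_description _ H))
    | right _ => x
    end
  end.

Lemma swp_1 {T} (c1 c2 : nat -> T) (inj1 : forall i j, c1 i = c1 j -> i = j) i :
  swp c1 c2 (c1 i) = c2 i.
Proof.
  unfold swp. destruct (excluded_middle_informative _) as [H|H].
  - destruct (constructive_indefinite_description _ H) as [j Hj]; simpl. f_equal; auto.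
  - exfalso; eauto.
Qed.

Lemma swp_2 {T} (c1 c2 : nat -> T) (inj2 : forall i j, c2 i = c2 j -> i = j)
  (disj : forall i j, c1 i <> c2 j) i : swp c1 c2 (c2 i) = c1 i.
Proof.
  unfold swp. destruct (excluded_middle_informative _) as [H|H].
  - destruct H as [j Hj]. exfalso; eapply disj; eauto.
  - destruct (excluded_middle_informative _) as [H'|H'].
    + destruct (constructive_indefinite_description _ H') as [j Hj]; simpl. f_equal; auto.
    + exfalso; eauto.
Qed.

Lemma swp_3 {T} (c1 c2 : nat -> T) x :
  ~ (exists i, c1 i = x) -> ~ (exists i, c2 i = x) -> swp c1 c2 x = x.
Proof.
  intros H1 H2. unfold swp. destruct (excluded_middle_informative _); [tauto|].
  destruct (excluded_middle_informative _); tauto.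
Qed.

Lemma swp_inv {T} (c1 c2 : nat -> T) (inj1 : forall i j, c1 i = c1 j -> i = j)
  (inj2 : forall i j, c2 i = c2 j -> i = j) (disj : forall i j, c1 i <> c2 j) x :
  swp c1 c2 (swp c1 c2 x) = x.
Proof.
  destruct (classic (exists i, c1 i = x)) as [[i <-]|H1].
  - rewrite (swp_1 c1 c2 inj1 i), (swp_2 c1 c2 inj2 disj i); auto.
  - destruct (classic (exists i, c2 i = x)) as [[i <-]|H2].
    + rewrite (swp_2 c1 c2 inj2 disj i), (swp_1 c1 c2 inj1 i); auto.
    + rewrite (swp_3 c1 c2 x H1 H2), (swp_3 c1 c2 x H1 H2); auto.
Qed.

Definition succA {s} (R : sym s) (A : structure s) (x : A) : A :=
  epsilon (inhabits x) (fun y => edgeA R A x y).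

Fixpoint cA {s} (R : sym s) (A : structure s) (a : A) (n : nat) : A :=
  match n with 0 => a | S n => succA R A (cA R A a n) end.

Lemma no_model {s} {R : sym s} (HR : 2 <= arity s R) (X : nat -> Prop) (A : structure s)
  (Hout : forall x y z : A, edgeA R A x y -> edgeA R A x z -> y = z)
  (Hin : forall x y z : A, edgeA R A y x -> edgeA R A z x -> y = z)
  (Htwo : exists a b : A, a <> b /\ start R A a /\ start R A b)
  (Hch : forall n (a : A), start R A a -> Pch R A n a)
  (Hshape : forall i, 1 <= i < arity s R ->
     forall g : nat -> A, rel A R (fun j => g (proj1_sig j)) -> g i = g 1)
  (Hempty : forall S0, S0 <> R -> forall g : nat -> A, ~ rel A S0 (fun j => g (proj1_sig j)))
  (HP : aut_supports_in X A) : False.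
Proof.
  set (ext := fun k (t : fin k -> A) (j : nat) =>
    match lt_dec j k with left h => t (exist _ j h) | right _ => dom_inh A end).
  assert (Hext : forall k (t : fin k -> A) (j : fin k), ext k t (proj1_sig j) = t j).
  { intros k t j. unfold ext. destruct (lt_dec _ _) as [h|h].
    - f_equal. apply fin_eq. auto.
    - exfalso. apply h. apply (proj2_sig j). }
  assert (Hempty' : forall S0, S0 <> R -> forall t, ~ rel A S0 t).
  { intros S0 HS t Ht. apply (Hempty S0 HS (ext _ t)). revert Ht; apply rel_ext.
    intros j; rewrite Hext; auto. }
  assert (Hpat : forall t, rel A R t -> forall j, t j = pat (t (f0 HR)) (t (f1 HR)) j).
  { intros t Ht j. unfold pat. destruct (Nat.eqb (proj1_sig j) 0) eqn:Ej.
    - apply Nat.eqb_eq in Ej. f_equal. apply fin_eq. auto.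
    - apply Nat.eqb_neq in Ej.
      assert (Hr : rel A R (fun j => ext _ t (proj1_sig j))) by
        (revert Ht; apply rel_ext; intros j'; rewrite Hext; auto).
      pose proof (Hshape (proj1_sig j) ltac:(pose proof (proj2_sig j) as Hj2; cbv beta in Hj2; lia) _ Hr) as Hs.
      rewrite Hext in Hs. rewrite Hs. rewrite <- (Hext _ t (f1 HR)). auto. }
  destruct Htwo as (a & b & Hab & Ha & Hb).
  assert (Hc : forall a0, start R A a0 -> forall k, (forall n, Pch R A n (cA R A a0 k))).
  { intros a0 Ha0 k. induction k as [|k IH]; intros n; [apply Hch; auto|].
    destruct (IH (S n)) as (y & Hy1 & Hy2). cbn [cA].
    assert (Hs : edgeA R A (cA R A a0 k) (succA R A (cA R A a0 k))).
    { unfold succA. apply epsilon_spec. eauto. }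
    rewrite <- (Hout _ _ _ Hy1 Hs); auto. }
  assert (He : forall a0, start R A a0 -> forall k, edgeA R A (cA R A a0 k) (cA R A a0 (S k))).
  { intros a0 Ha0 k. destruct (Hc a0 Ha0 k 1) as (y & Hy1 & _).
    cbn [cA]. unfold succA. apply epsilon_spec. eauto. }
  assert (Hmeet : forall a0 b0, start R A a0 -> start R A b0 ->
     forall i j, cA R A a0 i = cA R A b0 j -> i = j /\ a0 = b0).
  { intros a0 b0 Ha0 Hb0 i. induction i as [|i IH]; intros [|j] Hij.
    - auto.
    - exfalso. apply Ha0. exists (cA R A b0 j). cbn [cA] in Hij. rewrite Hij.
      apply (He b0 Hb0 j).
    - exfalso. apply Hb0. exists (cA R A a0 i). cbn [cA] in Hij. rewrite <- Hij.
      apply (He a0 Ha0 i).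
    - assert (Hp : cA R A a0 i = cA R A b0 j).
      { apply (Hin (cA R A a0 (S i))); [apply He; auto|]. rewrite Hij. apply He; auto. }
      destruct (IH j Hp). split; auto. }
  set (c1 := cA R A a). set (c2 := cA R A b).
  assert (inj1 : forall i j, c1 i = c1 j -> i = j) by (intros i j H; apply (Hmeet a a Ha Ha i j H)).
  assert (inj2 : forall i j, c2 i = c2 j -> i = j) by (intros i j H; apply (Hmeet b b Hb Hb i j H)).
  assert (disj : forall i j, c1 i <> c2 j) by (intros i j H; apply Hab; apply (Hmeet a b Ha Hb i j H)).
  set (f := swp c1 c2).
  assert (Hff : forall x, f (f x) = x) by (intro x; apply swp_inv; auto).
  assert (Hedge : forall x y, edgeA R A x y -> edgeA R A (f x) (f y)).
  { intros x y Hxy.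
    destruct (classic (exists i, c1 i = x)) as [[i <-]|H1].
    - rewrite (Hout _ _ _ Hxy (He a Ha i)). unfold f. fold (c1 (S i)).
      rewrite !swp_1; auto. apply He; auto.
    - destruct (classic (exists i, c2 i = x)) as [[i <-]|H2].
      + rewrite (Hout _ _ _ Hxy (He b Hb i)). unfold f. fold (c2 (S i)).
        rewrite !swp_2; auto. apply He; auto.
      + assert (Hy1 : ~ exists j, c1 j = y).
        { intros [[|j] Hj].
          - apply Ha. exists x. rewrite <- Hj in Hxy. auto.
          - apply H1. exists j. apply (Hin y); [rewrite <- Hj; apply (He a Ha j)|auto]. }
        assert (Hy2 : ~ exists j, c2 j = y).
        { intros [[|j] Hj].
          - apply Hb. exists x. rewrite <- Hj in Hxy. auto.
          - apply H2. exists j. apply (Hin y); [rewrite <- Hj; apply (He b Hb j)|auto]. }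
        unfold f. rewrite !swp_3; auto. }
  assert (Hfw : forall r (t : fin (arity s r) -> A), rel A r t -> rel A r (fun i => f (t i))).
  { intros r t Ht. destruct (classic (r = R)) as [Hr|Hr].
    - subst r. pose proof (Hpat t Ht) as Hp.
      assert (Hed : edgeA R A (t (f0 HR)) (t (f1 HR))) by (unfold edgeA; revert Ht; apply rel_ext; auto).
      apply Hedge in Hed. unfold edgeA in Hed. revert Hed; apply rel_ext.
      intro j. rewrite (Hp j). unfold pat. destruct (Nat.eqb _ _); auto.
    - exfalso; apply (Hempty' r Hr t Ht). }
  assert (Haut : automorphism A f).
  { split; [exists f; auto|]. intros r t; split; [apply Hfw|].
    intros Ht. apply Hfw in Ht. revert Ht; apply rel_ext. intro i; apply Hff. }
  destruct (HP f Haut) as (n & _ & Hcard).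
  refine (inf_support f c1 inj1 _ n Hcard).
  intros i. unfold f. rewrite swp_1; auto.
Qed.


Lemma fo_at {s} (R : sym s) enc q c : c < 4 ->
  fo R enc (4 * q + c) =
  match c with 0 => basic R q | 1 => chainF R q | 2 => shapeF R q | _ => emptyF (sym_of R enc q) end.
Proof.
  intros Hc. unfold fo. rewrite dec4_spec by auto. destruct c as [|[|[|c]]]; auto.
Qed.

Lemma part2 {s} (Hcount : countable_sig s) {R : sym s} (HR : 2 <= arity s R) (X : nat -> Prop)
  (H0 : X 0) (L : abstract_logic s) (HL : L_ge_FO L)
  (Hexp : L_expressible L (@aut_supports_in s X)) : ~ aleph0_compact L.
Proof.
  destruct Hcount as [enc Hinj]. destruct Hexp as [psi Hpsi].
  set (Lof := fun phi => epsilon (inhabits psi)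
                 (fun ps => forall A, lsat L A ps <-> sat_sentence A phi)).
  assert (HLof : forall phi, is_sentence phi -> forall A, lsat L A (Lof phi) <-> sat_sentence A phi).
  { intros phi Hs. unfold Lof. apply (epsilon_spec (inhabits psi)
      (fun ps => forall A, lsat L A ps <-> sat_sentence A phi)).
    apply (HL (fun A => sat_sentence A phi)). exists phi; split; auto. tauto. }
  set (e := fun m => match m with 0 => psi | S m => Lof (fo R enc m) end).
  intros Hc. destruct (Hc (fun ps => exists m, e m = ps)) as [A HA].
  - exists e. eauto.
  - intros l Hl.
    assert (HN : exists N, forall ph, In ph l -> exists m, m <= N /\ e m = ph).
    { clear Hc. induction l as [|ph l IH].
      - exists 0; simpl; tauto.
      - destruct IH as [N HN]; [intros; apply Hl; simpl; auto|].
        destruct (Hl ph (or_introl eq_refl)) as [m Hm].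
        exists (N + m). intros ph' [<-|H'].
        + exists m; split; [lia|auto].
        + destruct (HN ph' H') as (m' & Hm' & E'). exists m'; split; [lia|auto]. }
    destruct HN as [N HN]. exists (BN R N). intros ph Hph.
    destruct (HN ph Hph) as ([|m] & Hm & <-); simpl.
    + apply Hpsi. intros f Hf. exists 0; split; auto. apply card0. apply (BN_rigid HR N f Hf).
    + apply HLof; [apply sent_fo|]. apply (BN_fo HR). pose proof (dec4_le m). lia.
  - assert (Hfo : forall m, sat_sentence A (fo R enc m)).
    { intros m. apply (HLof _ (sent_fo R enc m)). apply HA. exists (S m). auto. }
    apply (no_model HR X A).
    + apply sat_out1. pose proof (Hfo (4 * 0 + 0)) as H. rewrite fo_at in H by lia. exact H.
    + apply sat_in1. pose proof (Hfo (4 * 1 + 0)) as H. rewrite fo_at in H by lia. exact H.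
    + apply sat_two. pose proof (Hfo (4 * 2 + 0)) as H. rewrite fo_at in H by lia. exact H.
    + intros n. apply sat_chain. pose proof (Hfo (4 * n + 1)) as H. rewrite fo_at in H by lia. exact H.
    + intros i Hi. apply (sat_shape R A i Hi). pose proof (Hfo (4 * i + 2)) as H.
      rewrite fo_at in H by lia. exact H.
    + intros S0 HS0. apply sat_empty. pose proof (Hfo (4 * enc S0 + 3)) as H.
      rewrite fo_at in H by lia. rewrite (sym_of_enc R enc Hinj S0 HS0) in H. exact H.
    + apply Hpsi. apply HA. exists 0. auto.
Qed.

Lemma compact_of_proof {s} (L : abstract_logic s) (HL : L_ge_FO L) (PS : proof_system L) :
  ps_sound PS -> ps_complete PS -> aleph0_compact L.
Proof.
  intros Hs Hc G _ Hfin.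
  destruct (HL (fun _ => False)) as [bot Hbot].
  { exists (FFalse s). split.
    - intros x H; exact H.
    - intros A; split; [intros H; apply (H (fun _ => dom_inh A))|tauto]. }
  apply NNPP. intros Hns.
  destruct (Hc G bot) as (pi & Hcon & Hprem).
  { intros A HA. exfalso; apply Hns. exists A; auto. }
  destruct (Hfin (premisses PS pi) Hprem) as [A HA].
  apply (Hbot A). rewrite <- Hcon. apply (Hs pi A HA).
Qed.


Theorem mainTheorem7 (s : signature) (Hcount : countable_sig s)
  (Q R : sym s) (HQR : Q <> R) (HR : 2 <= arity s R)
  (X : nat -> Prop)
  (HM : exists M : structure s,
          (forall t : fin (arity s Q) -> M, ~ rel M Q t) /\ aut_supports_in X M) :
  ~ FO_expressible (@aut_supports_in s X) /\
  (forall L : abstract_logic s, L_ge_FO L -> L_expressible L (@aut_supports_in s X) ->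
     ~ aleph0_compact L) /\
  (forall L : abstract_logic s, L_ge_FO L -> L_expressible L (@aut_supports_in s X) ->
     closed_neg L ->
     forall PS : proof_system L, ~ (ps_sound PS /\ ps_complete PS)).
Proof.
  destruct HM as [M [_ HMX]]. pose proof (X0_of_M HMX) as H0.
  split; [apply (part1 HR X H0)|split].
  - intros L HL Hexp. apply (part2 Hcount HR X H0 L HL Hexp).
  - intros L HL Hexp _ PS [Hs Hc]. apply (part2 Hcount HR X H0 L HL Hexp).
    apply (compact_of_proof L HL PS Hs Hc).
Qed.
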